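(* Let $X$ be a real Hilbert space and let $A,B$ be closed convex nonempty subsets of $X$ such that $A\cap B$ is bounded and nonempty. Suppose the couple $(A,B)$ is regular. Then for every choice of sequences $\{A_n\},\{B_n\}$ of closed convex nonempty subsets of $X$ converging in the Attouch–Wets sense to $A$ and $B$ respectively, and every $a_0\in X$, the perturbed alternating projections sequences $\{a_n\},\{b_n\}$ satisfy $\mathrm{dist}(a_n,A\cap B)\to0$ and $\mathrm{dist}(b_n,A\cap B)\to0$.
   Context: $P_C$ is the metric projection onto a closed convex nonempty set $C$; $B_X$ the closed unit ball; $\mathrm{dist}(x,S)=\inf_{s\in S}\|x-s\|$. Since $A\cap B\neq\emptyset$, regularity of $(A,B)$ means: for each $\epsilon>0$ there is $\delta>0$ such that $\mathrm{dist}(x,A\cap B)\le\epsilon$ whenever $x\in X$ and $\max\{\mathrm{dist}(x,A),\mathrm{dist}(x,B)\}\le\delta$. Attouch–Wets convergence: for nonempty closed $C,D$ and $N\in\mathbb N$ let $e_N(C,D)=\sup_{c\in C\cap NB_X}\mathrm{dist}(c,D)$ ($0$ if $C\cap NB_X=\emptyset$) and $h_N(C,D)=\max\{e_N(C,D),e_N(D,C)\}$; $C_j\to C$ if $\lim_j h_N(C_j,C)=0$ for every $N\in\mathbb N$. The perturbed alternating projections sequences with starting point $a_0$ are defined by $b_n=P_{B_n}(a_{n-1})$ and $a_n=P_{A_n}(b_n)$ for $n\in\mathbb N$. *)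

(* Defs.v *)
From HB Require Import structures.
From mathcomp Require Import all_boot all_order all_algebra.
From mathcomp Require Import all_classical all_reals all_analysis.
Set Implicit Arguments. Unset Strict Implicit. Unset Printing Implicit Defensive.
Import Order.TTheory GRing.Theory Num.Theory.
Import numFieldNormedType.Exports.
Local Open Scope classical_set_scope.
Local Open Scope ring_scope.

(* The norm of V is induced by the inner product ip: ip is a symmetric
   bilinear form with |x|^2 = ip x x (so it is positive definite).
   A real Hilbert space is a complete normed space (completeNormedModType)
   carrying such an inner product. *)
Definition inner_product (R : realType) (V : normedModType R)
  (ip : V -> V -> R) : Prop :=
  [/\ (forall x y, ip x y = ip y x),
      (forall a x y z, ip (a *: x + y) z = a * ip x z + ip y z)
    & (forall x, `|x| ^+ 2 = ip x x)].

Definition dist (R : realType) (V : normedModType R) (x : V) (S : set V) : R :=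
  inf [set `|x - s| | s in S].

Definition ccn (R : realType) (V : normedModType R) (C : set V) : Prop :=
  [/\ closed C, convex_set (C : set (convex_lmodType V)) & C !=set0].

Definition proj (R : realType) (V : normedModType R) (C : set V) (x : V) : V :=
  xget 0 [set p | C p /\ `|x - p| = dist x C].

(* e_N(C,D) = sup_{c in C cap N B_X} dist(c,D), and 0 if C cap N B_X = empty
   (dist >= 0, so adjoining 0 to the set implements the convention). *)
Definition excess (R : realType) (V : normedModType R) (N : nat) (C D : set V) : R :=
  sup ([set dist c D | c in C `&` [set x | `|x| <= N%:R]] `|` [set 0]).

Definition hN (R : realType) (V : normedModType R) (N : nat) (C D : set V) : R :=
  Num.max (excess N C D) (excess N D C).

Definition AW_cvg (R : realType) (V : normedModType R) (Cs : nat -> set V) (C : set V) : Prop :=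
  forall N : nat, (fun j => hN N (Cs j) C) @ \oo --> (0 : R).

Definition regular (R : realType) (V : normedModType R) (A B : set V) : Prop :=
  forall eps : R, 0 < eps -> exists2 delta : R, 0 < delta &
    forall x : V, Num.max (dist x A) (dist x B) <= delta -> dist x (A `&` B) <= eps.

Fixpoint pap_a (R : realType) (V : normedModType R) (As Bs : nat -> set V) (a0 : V) (n : nat) : V :=
  match n with
  | 0 => a0
  | m.+1 => proj (As m.+1) (proj (Bs m.+1) (pap_a As Bs a0 m))
  end.

(* b_n for n >= 1 (the value at n = 0 is irrelevant) *)
Definition pap_b (R : realType) (V : normedModType R) (As Bs : nat -> set V) (a0 : V) (n : nat) : V :=
  proj (Bs n) (pap_a As Bs a0 n.-1).

(* Main.v *)
Require Import Defs.
From HB Require Import structures.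
From mathcomp Require Import all_boot all_order all_algebra.
From mathcomp Require Import all_classical all_reals all_analysis.
From mathcomp Require Import ring lra.
Set Implicit Arguments. Unset Strict Implicit. Unset Printing Implicit Defensive.
Import Order.TTheory GRing.Theory Num.Theory.
Import numFieldNormedType.Exports.
Local Open Scope classical_set_scope.
Local Open Scope ring_scope.


Section Dist.
Context (R : realType) (X : normedModType R).

Lemma dist_le (S : set X) x s : S s -> dist x S <= `|x - s|.
Proof.
move=> Ss; rewrite /dist; apply: ge_inf; last by exists s.
by exists 0 => _ [y _ <-].
Qed.

Lemma dist_ge0 (S : set X) x : S !=set0 -> 0 <= dist x S.
Proof.
move=> [s Ss]; apply: lb_le_inf; first by exists `|x - s|, s.
by move=> _ [y _ <-].
Qed.

Lemma dist_ge (S : set X) x r : S !=set0 -> (forall s, S s -> r <= `|x - s|) -> r <= dist x S.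
Proof.
move=> [s Ss] h; apply: lb_le_inf; first by exists `|x - s|, s.
by move=> _ [y Sy <-]; exact: h.
Qed.

Lemma dist_lt (S : set X) x r : S !=set0 -> dist x S < r -> exists2 s, S s & `|x - s| < r.
Proof.
move=> [s Ss] h; have [|_ [y Sy <-] lt] := inf_lt _ h; first by exists `|x - s|, s.
by exists y.
Qed.

Lemma dist_lip (S : set X) x y : S !=set0 -> dist x S <= `|x - y| + dist y S.
Proof.
move=> S0; rewrite -lerBlDl; apply: dist_ge => // s Ss.
have h1 := dist_le x Ss; have h2 := ler_distD y x s.
by rewrite lerBlDl (le_trans h1).
Qed.

Lemma ccn_conv (C : set X) x y (t : R) : ccn C -> C x -> C y -> 0 <= t -> t <= 1 ->
  C (t *: x + (1 - t) *: y).
Proof.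
case=> _ cC _ Cx Cy t0 t1.
by have := cC x y (Itv01 t0 t1) (mem_set Cx) (mem_set Cy); rewrite inE.
Qed.

Lemma ccnI (C D : set X) : ccn C -> ccn D -> C `&` D !=set0 -> ccn (C `&` D).
Proof.
case=> cC vC _ [cD vD _] n0; split => //; first exact: closedI.
move=> x y l; rewrite !inE => -[Cx Dx] [Cy Dy].
split; [have := vC x y l; rewrite !inE; apply| have := vD x y l; rewrite !inE; apply] => //.
Qed.

End Dist.


Section Hilbert.
Context (R : realType) (X : completeNormedModType R) (ip : X -> X -> R)
  (hip : inner_product ip).

Lemma ipC x y : ip x y = ip y x. Proof. by case: hip. Qed.
Lemma ip_lin a x y z : ip (a *: x + y) z = a * ip x z + ip y z.
Proof. by case: hip. Qed.
Lemma ipn x : `|x| ^+ 2 = ip x x. Proof. by case: hip. Qed.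
Lemma ip0l z : ip 0 z = 0.
Proof.
have := ip_lin 1 0 0 z; rewrite scaler0 addr0 mul1r => h; lra.
Qed.
Lemma ipDl x y z : ip (x + y) z = ip x z + ip y z.
Proof. by rewrite -[x]scale1r ip_lin mul1r scale1r. Qed.
Lemma ipZl a x z : ip (a *: x) z = a * ip x z.
Proof. by rewrite -[a *: x]addr0 ip_lin ip0l addr0. Qed.
Lemma ipNl x z : ip (- x) z = - ip x z.
Proof. by rewrite -scaleN1r ipZl mulN1r. Qed.
Lemma ipDr x y z : ip z (x + y) = ip z x + ip z y.
Proof. by rewrite ipC ipDl !(ipC z). Qed.
Lemma ipZr a x z : ip z (a *: x) = a * ip z x.
Proof. by rewrite ipC ipZl (ipC z). Qed.
Lemma ipNr x z : ip z (- x) = - ip z x.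
Proof. by rewrite ipC ipNl (ipC z). Qed.

Lemma le_diff (a b c : R) : a <= b -> b - a = c -> 0 <= c.
Proof. by move=> h <-; rewrite subr_ge0. Qed.

Lemma normZ2 (t : R) (v : X) : `|t *: v| ^+ 2 = t ^+ 2 * `|v| ^+ 2.
Proof. by rewrite normrZ exprMn real_normK // num_real. Qed.

Lemma three_pt (C : set X) x p y : ccn C -> C p ->
  (forall c, C c -> `|x - p| <= `|x - c|) -> C y ->
  `|y - p| ^+ 2 + `|x - p| ^+ 2 <= `|x - y| ^+ 2.
Proof.
move=> hC Cp hmin Cy.
set S := ip x y - ip x p - ip y p + ip p p.
set V := ip y y - 2 * ip y p + ip p p.
have V0 : 0 <= V.
  have := sqr_ge0 `|y - p|; rewrite ipn !(ipDl, ipNl, ipDr, ipNr) /V.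
  by rewrite (ipC p y); lra.
have key : forall t : R, 0 < t -> t <= 1 -> 2 * S <= t * V.
  move=> t t0 t1; have Cc := ccn_conv hC Cy Cp (ltW t0) t1.
  have h := hmin _ Cc.
  have h2 : `|x - p| ^+ 2 <= `|x - (t *: y + (1 - t) *: p)| ^+ 2.
    by rewrite lerXn2r // nnegrE.
  move: h2; rewrite !ipn !(ipDl, ipNl, ipDr, ipNr, ipZl, ipZr).
  rewrite (ipC p x) (ipC y x) (ipC p y) => h3.
  have h4 : 0 <= t * (t * V - 2 * S) by apply: (le_diff h3); rewrite /V /S; ring.
  rewrite pmulr_rge0 // in h4; lra.
have fin : `|x - y| ^+ 2 - `|y - p| ^+ 2 - `|x - p| ^+ 2 = - 2 * S.
  rewrite !ipn !(ipDl, ipNl, ipDr, ipNr) (ipC p x) (ipC y x) (ipC p y) /S; ring.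
clearbody S V.
have S0 : S <= 0.
  case: (lerP S 0) => // s0; exfalso.
  have hV : 0 < S + V by lra.
  have t1 : S / (S + V) <= 1 by rewrite ler_pdivrMr // mul1r; lra.
  have := key _ (divr_gt0 s0 hV) t1.
  have -> : S / (S + V) * V = S - S / (S + V) * S.
    by field; apply/negP => /eqP h; lra.
  have : 0 <= S / (S + V) * S by rewrite mulr_ge0 // ?divr_ge0; lra.
  lra.
lra.
Qed.

Definition ie (n : nat) : R := n.+1%:R^-1.

Lemma inv_small (e : R) (n : nat) : 0 < e -> e^-1 <= n%:R -> n.+1%:R^-1 <= e.
Proof.
move=> e0 h; have hn : 0 < n.+1%:R :> R by rewrite ltr0Sn.
rewrite -(ler_pM2r hn) mulVf ?gt_eqF //.
have : e * e^-1 <= e * n%:R by rewrite ler_pM2l.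
rewrite mulfV ?gt_eqF // -natr1 mulrDr mulr1 => h1; lra.
Qed.

Lemma proj_ex (C : set X) x : ccn C -> exists p, C p /\ `|x - p| = dist x C.
Proof.
move=> hC; have C0 : C !=set0 by case: hC.
have [d dd] : {d | dist x C = d} by exists (dist x C).
have d0 : 0 <= d by rewrite -dd; exact: dist_ge0.
have dle : forall y, C y -> d <= `|x - y| by move=> y Cy; rewrite -dd; exact: dist_le.
rewrite dd.
have /choice [c hc] : forall n : nat, exists c, C c /\ `|x - c| < d + ie n.
  move=> n; have hlt : d < d + ie n by rewrite ltrDl /ie invr_gt0 ltr0Sn.
  by rewrite -{1}dd in hlt; have [s Cs lt] := dist_lt C0 hlt; exists s.
have bnd : forall n m, `|c n - c m| ^+ 2 <=
    2 * (d + ie n) ^+ 2 + 2 * (d + ie m) ^+ 2 - 4 * d ^+ 2.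
  move=> n m; have [Cn hn] := hc n; have [Cm hm] := hc m.
  have h0 : 0 <= 2^-1 :> R by rewrite invr_ge0.
  have h1 : 2^-1 <= 1 :> R by rewrite invf_le1 // ler1n.
  have hmid := dle _ (ccn_conv hC Cn Cm h0 h1).
  have e1 : `|x - c n| ^+ 2 <= (d + ie n) ^+ 2.
    by rewrite lerXn2r ?nnegrE ?(ltW hn) // addr_ge0 // invr_ge0.
  have e2 : `|x - c m| ^+ 2 <= (d + ie m) ^+ 2.
    by rewrite lerXn2r ?nnegrE ?(ltW hm) // addr_ge0 // invr_ge0.
  have e3 : d ^+ 2 <= `|x - (2^-1 *: c n + (1 - 2^-1) *: c m)| ^+ 2.
    by rewrite lerXn2r ?nnegrE.
  have par : `|c n - c m| ^+ 2 = 2 * `|x - c n| ^+ 2 + 2 * `|x - c m| ^+ 2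
      - 4 * `|x - (2^-1 *: c n + (1 - 2^-1) *: c m)| ^+ 2.
    rewrite !ipn !(ipDl, ipNl, ipDr, ipNr, ipZl, ipZr).
    by rewrite (ipC (c n) x) (ipC (c m) x) (ipC (c m) (c n)); field.
  rewrite par; move: e1 e2 e3.
  generalize (`|x - c n| ^+ 2) (`|x - c m| ^+ 2) (`|x - (2^-1 *: c n + (1 - 2^-1) *: c m)| ^+ 2).
  generalize ((d + ie n) ^+ 2) ((d + ie m) ^+ 2) (d ^+ 2).
  move=> *; lra.
have small : forall e : R, 0 < e -> exists N, forall n, (N <= n)%N -> ie n <= e.
  move=> e e0; have [N _ hN] := nbhs_infty_ger (e^-1).
  by exists N => n Nn; apply: inv_small => //; exact: hN.
have cau : cauchy (c @ \oo).
  apply: cauchy_exP => e e0.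
  set et := Num.min 1 (e ^+ 2 / (8 * d + 8)).
  have d8 : 0 < 8 * d + 8 by lra.
  have et0 : 0 < et by rewrite lt_min ltr01 divr_gt0 // exprn_gt0.
  have et1 : et <= 1 by rewrite ge_min lexx.
  have et2 : et * (8 * d + 8) <= e ^+ 2.
    rewrite -ler_pdivlMr // ge_min; apply/orP; right; exact: lexx.
  have [N hN] := small et et0.
  exists (c N); exists N => // n /= Nn.
  rewrite -ball_normE /ball_ /=.
  case: (ltP `|c N - c n| e) => // h; exfalso.
  have h2 : e ^+ 2 <= `|c N - c n| ^+ 2 by rewrite lerXn2r ?nnegrE // ltW.
  have := bnd N n; have a1 := hN N (leqnn N); have a2 := hN n Nn.
  have b1 : (d + ie N) ^+ 2 <= (d + et) ^+ 2.
    by rewrite lerXn2r ?nnegrE ?lerD2l // addr_ge0 // ?invr_ge0 // ltW.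
  have b2 : (d + ie n) ^+ 2 <= (d + et) ^+ 2.
    by rewrite lerXn2r ?nnegrE ?lerD2l // addr_ge0 // ?invr_ge0 // ltW.
  have b3 : (d + et) ^+ 2 = d ^+ 2 + 2 * (d * et) + et * et by ring.
  have b4 : et * et <= et by rewrite ler_piMr // ltW.
  have b5 : et * (8 * d + 8) = 8 * (d * et) + 8 * et by ring.
  move: h2 b1 b2 b3 b4 b5 et2 et0.
  generalize (`|c N - c n| ^+ 2) ((d + ie N) ^+ 2) ((d + ie n) ^+ 2).
  generalize ((d + et) ^+ 2) (d ^+ 2) (d * et) (et * et) (et * (8 * d + 8)) (e ^+ 2).
  move=> *; lra.
have cv : c @ \oo --> lim (c @ \oo) by apply: cauchy_cvg cau.
set l := lim (c @ \oo) in cv.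
have Cl : C l.
  have cC : closed C by case: hC.
  apply: (closed_cvg (u_ := c) C cC _ l cv).
  by apply: nearW => n; case: (hc n).
exists l; split => //; apply/eqP; rewrite eq_le dle // andbT.
suff key : forall e : R, 0 < e -> `|x - l| <= d + e.
  by apply/ler_addgt0Pr => e e0; exact: key.
move=> e e0.
have e2 : 0 < e / 2 by rewrite divr_gt0.
have [N1 _ hN1] := (cvgrPdist_lt _ _).1 cv _ e2.
have [N2 hN2] := small _ e2.
have h1 : `|l - c (maxn N1 N2)| < e / 2 by apply: hN1; rewrite /= leq_maxl.
have h2 : ie (maxn N1 N2) <= e / 2 by apply: hN2; rewrite leq_maxr.
move: (maxn N1 N2) h1 h2 => n h1 h2.
have h3 : `|x - c n| < d + ie n by exact: (hc n).2.
have h4 : `|x - l| <= `|x - c n| + `|c n - l| by exact: ler_distD.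
have h5 : `|c n - l| < e / 2 by rewrite distrC.
lra.
Qed.

End Hilbert.


Section AW.
Context (R : realType) (X : normedModType R).

Lemma excess_ge (N : nat) (C D : set X) c : D !=set0 -> C c -> `|c| <= N%:R ->
  dist c D <= excess N C D.
Proof.
move=> [d0 Dd0] Cc cN; rewrite /excess; apply: sup_upper_bound; last by left; exists c.
split; first by exists 0; right.
exists (N%:R + `|d0|) => _ [[y [Cy yN] <-]|->].
  apply: le_trans (dist_le y Dd0) _; apply: le_trans (ler_distD 0 _ _) _.
  by rewrite sub0r normrN subr0 lerD.
by rewrite addr_ge0.
Qed.

Lemma hN_ge1 (N : nat) (C D : set X) c : D !=set0 -> C c -> `|c| <= N%:R ->
  dist c D <= hN N C D.
Proof. by move=> D0 Cc cN; rewrite /hN le_max excess_ge. Qed.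

Lemma hN_ge2 (N : nat) (C D : set X) d : C !=set0 -> D d -> `|d| <= N%:R ->
  dist d C <= hN N C D.
Proof. by move=> C0 Dd dN; rewrite /hN le_max [X in _ || X]excess_ge ?orbT. Qed.

Lemma aw_ev (Cs : nat -> set X) (C : set X) (N : nat) (t : R) : AW_cvg Cs C -> 0 < t ->
  exists M, forall j, (M <= j)%N -> hN N (Cs j) C < t.
Proof.
move=> h t0; have [M _ hM] := (cvgr0Pnorm_lt _).1 (h N) t t0.
by exists M => j Mj; apply: le_lt_trans (ler_norm _) (hM j Mj).
Qed.

End AW.

Section Step.
Context (R : realType) (X : completeNormedModType R) (ip : X -> X -> R)
  (hip : inner_product ip).

Lemma proj_spec (C : set X) x : ccn C -> C (Defs.proj C x) /\ `|x - Defs.proj C x| = dist x C.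
Proof. by move=> hC; apply: (xgetPex 0 (proj_ex hip x hC)). Qed.

Lemma proj_3 (C : set X) x y : ccn C -> C y ->
  `|y - Defs.proj C x| ^+ 2 + `|x - Defs.proj C x| ^+ 2 <= `|x - y| ^+ 2.
Proof.
move=> hC Cy; have [Cp hp] := proj_spec x hC.
apply: (three_pt hip hC Cp) => // c Cc; rewrite hp; exact: dist_le.
Qed.

Lemma proj_le (C : set X) x y : ccn C -> C y -> `|y - Defs.proj C x| <= `|x - y|.
Proof.
move=> hC Cy; have h := proj_3 x hC Cy.
have h2 : `|y - Defs.proj C x| ^+ 2 <= `|x - y| ^+ 2.
  by apply: le_trans h; rewrite lerDl sqr_ge0.
by move: h2; rewrite ler_pXn2r ?nnegrE.
Qed.

Lemma step (An Bn C : set X) x (eta : R) :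
  ccn An -> ccn Bn -> ccn C ->
  (forall z, C z -> dist z An <= eta) -> (forall z, C z -> dist z Bn <= eta) ->
  dist (Defs.proj Bn x) C <= dist x C + 2 * eta /\
  (eta <= dist (Defs.proj An (Defs.proj Bn x)) C ->
   (dist (Defs.proj An (Defs.proj Bn x)) C - eta) ^+ 2 + `|Defs.proj An (Defs.proj Bn x) - Defs.proj Bn x| ^+ 2
     <= (dist x C + 3 * eta) ^+ 2).
Proof.
move=> hA hB hC hzA hzB.
have C0 : C !=set0 by case: hC.
have hb := proj_le x hB; set b := Defs.proj Bn x in hb *; clearbody b.
have ha := proj_3 b hA; set a := Defs.proj An b in ha *; clearbody a.
have [Cz xz] := proj_spec x hC; set z := Defs.proj C x in Cz xz; clearbody z.
have [Bp zp] := proj_spec z hB; set p := Defs.proj Bn z in Bp zp; clearbody p.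
have [Aq zq] := proj_spec z hA; set q := Defs.proj An z in Aq zq; clearbody q.
have e1 := hzA z Cz; have e2 := hzB z Cz.
have d0 : 0 <= dist x C by exact: dist_ge0.
have eta0 : 0 <= eta by apply: le_trans e1; apply: dist_ge0; case: hA.
have bp : `|p - b| <= `|x - p| by exact: hb.
have xp : `|x - p| <= `|x - z| + `|z - p| by exact: ler_distD.
have bz : `|b - z| <= `|b - p| + `|p - z| by exact: ler_distD.
have pb : `|b - p| = `|p - b| by rewrite distrC.
have pz : `|p - z| = `|z - p| by rewrite distrC.
have qz : `|q - z| = `|z - q| by rewrite distrC.
have dbC : dist b C <= `|b - z| by exact: dist_le.
split; first lra.
move=> Dge.
have h3 : `|q - a| ^+ 2 + `|b - a| ^+ 2 <= `|b - q| ^+ 2 by exact: ha.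
have bq : `|b - q| <= `|b - p| + `|p - z| + `|z - q|.
  apply: le_trans (ler_distD z b q) _; rewrite lerD2r; exact: ler_distD.
have daC : dist a C <= `|a - z| by exact: dist_le.
have az : `|a - z| <= `|a - q| + `|q - z| by exact: ler_distD.
have aq : `|a - q| = `|q - a| by rewrite distrC.
have s1 : (dist a C - eta) ^+ 2 <= `|q - a| ^+ 2.
  rewrite lerXn2r ?nnegrE ?subr_ge0 //; lra.
have s2 : `|b - q| ^+ 2 <= (dist x C + 3 * eta) ^+ 2.
  rewrite lerXn2r ?nnegrE //; last by lra.
  lra.
have s3 : `|a - b| = `|b - a| by rewrite distrC.
rewrite s3; move: h3 s1 s2.
generalize (`|q - a| ^+ 2) (`|b - a| ^+ 2) (`|b - q| ^+ 2) ((dist a C - eta) ^+ 2).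
move=> *; lra.
Qed.

End Step.

Section Vec.
Context (R : realType) (X : normedModType R).

Lemma normD_le (u v : X) : `|u| <= `|u - v| + `|v|.
Proof. by have := ler_normD (u - v) v; rewrite subrK. Qed.

Lemma dist3 (u v w y : X) : `|u - y| <= `|u - v| + `|v - w| + `|w - y|.
Proof.
apply: le_trans (ler_distD w u y) _; rewrite lerD2r; exact: ler_distD.
Qed.

Lemma vec1 (t : R) (a q : X) : t *: a + (1 - t) *: q - q = t *: (a - q).
Proof.
by rewrite scalerBl scale1r scalerBr addrCA addrAC subrr add0r.
Qed.

Lemma vec2 (t : R) (a q b p : X) :
  t *: a + (1 - t) *: q - (t *: b + (1 - t) *: p) = t *: (a - b) + (1 - t) *: (q - p).
Proof. by rewrite !scalerBr opprD addrACA. Qed.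

End Vec.


Section Reg.
Context (R : realType) (X : completeNormedModType R) (ip : X -> X -> R)
  (hip : inner_product ip).

Lemma fin_aux (delta r L K D t eta : R) : 0 < delta -> 0 < L -> L < r -> 0 < t ->
  t * r = L -> delta / 2 <= t * K -> D <= r + eta -> eta <= 1 -> 0 <= D ->
  delta / (2 * (L + 1)) * D <= K.
Proof.
move=> d0 L0 Lr t0 tr tK Dr e1 D0.
have r0 : 0 < r by lra.
have m1 : delta * r <= 2 * (L * K).
  have h : delta / 2 * r <= t * K * r by rewrite ler_wpM2r // ltW.
  rewrite -tr; nra.
have m2 : delta <= 2 * K by nra.
rewrite mulrAC ler_pdivrMr; last by lra.
nra.
Qed.

Lemma reg_lower (A B An Bn : set X) (eps delta rho eta L : R) (N : nat) z0 :
  ccn A -> ccn B -> ccn An -> ccn Bn ->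
  (forall x, Num.max (dist x A) (dist x B) <= delta -> dist x (A `&` B) <= eps) ->
  0 < eps -> 0 < delta ->
  (A `&` B) z0 -> (forall z, (A `&` B) z -> `|z| <= rho) ->
  L = 2 * rho + 2 * eps + 2 ->
  0 <= eta -> eta <= 1 -> eta <= delta / 8 ->
  dist z0 An <= eta -> dist z0 Bn <= eta ->
  rho + 2 * L + 4 <= N%:R ->
  (forall a, An a -> `|a| <= N%:R -> dist a A <= delta / 4) ->
  (forall b, Bn b -> `|b| <= N%:R -> dist b B <= delta / 4) ->
  forall a, An a -> eps < dist a (A `&` B) ->
  delta / (2 * (L + 1)) * dist a (A `&` B) <= dist a Bn.
Proof.
move=> hA hB hAn hBn hreg e0 d0 Cz0 hrho hL et0 et1 et2 dzA dzB hN hdA hdB.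
set C := A `&` B.
have B0 : B !=set0 by case: hB.
have Bn0 : Bn !=set0 by case: hBn.
have C0 : C !=set0 by exists z0.
have rz0 : `|z0| <= rho by exact: hrho.
have rho0 : 0 <= rho by apply: le_trans rz0.
have [Aq0 zq0] := proj_spec hip z0 hAn; set q0 := Defs.proj An z0 in Aq0 zq0; clearbody q0.
have [Bp0 zp0] := proj_spec hip z0 hBn; set p0 := Defs.proj Bn z0 in Bp0 zp0; clearbody p0.
have qz : `|q0 - z0| = `|z0 - q0| by rewrite distrC.
have inner : forall a', An a' -> `|a' - q0| <= L -> eps < dist a' C ->
    3 * delta / 4 < dist a' Bn.
  move=> a' Aa' ra' hD.
  have [Bb' ab'] := proj_spec hip a' hBn; set b' := Defs.proj Bn a' in Bb' ab'; clearbody b'.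
  have h1 : dist a' Bn <= `|a' - p0| by exact: dist_le.
  have h2 : `|a' - p0| <= `|a' - q0| + `|q0 - z0| + `|z0 - p0| by exact: dist3.
  have h3 : `|a'| <= `|a' - q0| + `|q0| by exact: normD_le.
  have h4 : `|q0| <= `|q0 - z0| + `|z0| by exact: normD_le.
  have h5 : `|b'| <= `|b' - a'| + `|a'| by exact: normD_le.
  have h6 : `|b' - a'| = `|a' - b'| by rewrite distrC.
  have h7 : dist a' A <= delta / 4 by apply: hdA => //; lra.
  have h8 : dist b' B <= delta / 4 by apply: hdB => //; lra.
  have h9 : dist a' B <= `|a' - b'| + dist b' B by exact: dist_lip.
  rewrite ltNge; apply/negP => h10.
  have h11 : Num.max (dist a' A) (dist a' B) <= delta by rewrite ge_max; apply/andP; split; lra.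
  have := hreg _ h11; rewrite -/C; lra.
move=> a Aa hD.
have daC : dist a C <= `|a - q0| + `|q0 - z0| by apply: le_trans (dist_le a Cz0) _; exact: ler_distD.
have dBn0 : 0 <= dist a Bn by exact: dist_ge0.
have DC0 : 0 <= dist a C by exact: dist_ge0.
have L1 : 0 < L + 1 by lra.
case: (lerP `|a - q0| L) => hr.
  have h1 := inner a Aa hr hD.
  have h2 : delta / (2 * (L + 1)) * dist a C <= delta / (2 * (L + 1)) * (L + 1).
    have k0 : 0 <= delta / (2 * (L + 1)) by apply: divr_ge0; lra.
    by rewrite ler_wpM2l //; lra.
  have h3 : delta / (2 * (L + 1)) * (L + 1) = delta / 2 by field; lra.
  lra.
set r := `|a - q0| in hr daC *.
have L0 : 0 < L by lra.
have r0 : 0 < r by lra.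
set t := L / r.
have t0 : 0 < t by rewrite divr_gt0.
have t1 : t <= 1 by rewrite ler_pdivrMr // mul1r ltW.
have tr : t * r = L by rewrite /t mulrAC -mulrA mulfV ?gt_eqF // mulr1.
clearbody t.
have Aa' := ccn_conv hAn Aa Aq0 (ltW t0) t1.
set a' := t *: a + (1 - t) *: q0 in Aa'.
have ra' : `|a' - q0| = L by rewrite /a' vec1 normrZ gtr0_norm.
have hD' : eps < dist a' C.
  have : 2 * eps + 1 <= dist a' C.
    apply: dist_ge => // z Cz.
    have g1 : `|a' - q0| <= `|a' - z| + `|z - z0| + `|z0 - q0| by exact: dist3.
    have g2 : `|z - z0| <= `|z| + `|z0| by exact: ler_normB.
    have g3 : `|z| <= rho by exact: hrho.
    lra.
  lra.
have ra'' : `|a' - q0| <= L by rewrite ra'.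
have h1 := inner a' Aa' ra'' hD'.
have [Bb1 ab1] := proj_spec hip a hBn; set b1 := Defs.proj Bn a in Bb1 ab1; clearbody b1.
have Bw := ccn_conv hBn Bb1 Bp0 (ltW t0) t1.
set w := t *: b1 + (1 - t) *: p0 in Bw.
have g1 : dist a' Bn <= `|a' - w| by exact: dist_le.
have t1' : 0 <= 1 - t by lra.
have g2 : `|a' - w| <= t * `|a - b1| + (1 - t) * `|q0 - p0|.
  rewrite /a' /w vec2; apply: le_trans (ler_normD _ _) _.
  by rewrite !normrZ (gtr0_norm t0) (ger0_norm t1').
have g3 : `|q0 - p0| <= `|q0 - z0| + `|z0 - p0| by exact: ler_distD.
have g4 : (1 - t) * `|q0 - p0| <= `|q0 - p0| by rewrite ler_piMl //; lra.
rewrite ab1 in g2.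
set K := dist a Bn in g2 dBn0 *.
set D := dist a C in hD DC0 daC *.
have tK : delta / 2 <= t * K.
  move: g1 g2 g4 h1; generalize (t * K) ((1 - t) * `|q0 - p0|); move=> *; lra.
apply: (fin_aux (eta := eta) d0 L0 hr t0 tr tK) => //.
by apply: le_trans daC _; rewrite lerD2l qz zq0.
Qed.
End Reg.


Section Main.
Context (R : realType).

Lemma rec_aux (D d tau kap th eps Y : R) :
  0 < eps -> 0 <= tau -> tau <= eps -> 4 * tau <= (1 - th) * eps -> 0 < th -> th < 1 ->
  1 <= th ^+ 2 * (1 + kap ^+ 2) -> 0 <= d -> eps < D -> 0 <= kap -> kap * D <= Y ->
  (D - tau) ^+ 2 + Y ^+ 2 <= (d + 3 * tau) ^+ 2 ->
  D <= 2 * eps \/ D <= d - (1 - th) * eps.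
Proof.
move=> e0 t0 te t4 th0 th1 thk d0 eD k0 kY hsq.
have u0 : 0 <= D - tau by lra.
have kD0 : 0 <= kap * D by rewrite mulr_ge0 //; lra.
have Y0 : 0 <= Y by apply: le_trans kD0 kY.
have h1 : (kap * D) ^+ 2 <= Y ^+ 2 by rewrite lerXn2r // nnegrE.
have h2 : (D - tau) ^+ 2 <= D ^+ 2 by rewrite lerXn2r ?nnegrE //; lra.
have h3 : (1 + kap ^+ 2) * (D - tau) ^+ 2 <= (d + 3 * tau) ^+ 2.
  have : kap ^+ 2 * (D - tau) ^+ 2 <= kap ^+ 2 * D ^+ 2 by rewrite ler_wpM2l // sqr_ge0.
  rewrite exprMn in h1; move: h1 hsq; nra.
have h4 : D - tau <= th * (d + 3 * tau).
  rewrite leNgt; apply/negP => h.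
  have : (th * (d + 3 * tau)) ^+ 2 < (D - tau) ^+ 2.
    by rewrite ltrXn2r // ?mulr_ge0 //; lra.
  rewrite exprMn => h5.
  have h6 : (1 + kap ^+ 2) * (th ^+ 2 * (d + 3 * tau) ^+ 2) < (1 + kap ^+ 2) * (D - tau) ^+ 2.
    by rewrite ltr_pM2l //; apply: ltr_pwDl => //; exact: sqr_ge0.
  have h7 : (d + 3 * tau) ^+ 2 <= (1 + kap ^+ 2) * (th ^+ 2 * (d + 3 * tau) ^+ 2).
    rewrite mulrA [(1 + _) * _]mulrC.
    by rewrite ler_peMl // sqr_ge0.
  lra.
have h8 : D <= th * d + (1 - th) * eps by nra.
case: (lerP d (2 * eps)) => hd; [left | right]; nra.
Qed.

Lemma theta_facts (k : R) : 0 < k ->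
  [/\ 0 < (2 + k) / (2 + 2 * k), (2 + k) / (2 + 2 * k) < 1 &
      1 <= ((2 + k) / (2 + 2 * k)) ^+ 2 * (1 + k)].
Proof.
move=> k0; have h : 0 < 2 + 2 * k by lra.
split.
- by rewrite divr_gt0 //; lra.
- by rewrite ltr_pdivrMr // mul1r; lra.
- rewrite expr_div_n mulrAC ler_pdivlMr ?exprn_gt0 // mul1r.
  nra.
Qed.

Lemma bnd_set (X : normedModType R) (C : set X) : [bounded x | x in C] ->
  exists M : R, forall x, C x -> `|x| <= M.
Proof.
move=> h; rewrite /bounded_near in h; case: h => M [Mr HM].
exists (M + 1) => x Cx; apply: (HM (M + 1)) => //; lra.
Qed.

Lemma natbig (r : R) : exists N : nat, r <= N%:R.
Proof. by have [N _ hN] := nbhs_infty_ger r; exists N; apply: hN => /=. Qed.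

Context (X : completeNormedModType R) (ip : X -> X -> R) (hip : inner_product ip)
  (A B : set X) (hA : ccn A) (hB : ccn B)
  (hAB0 : A `&` B !=set0) (hABb : [bounded x | x in A `&` B])
  (hreg : regular A B)
  (As Bs : nat -> set X) (hAs : forall n, ccn (As n)) (hBs : forall n, ccn (Bs n))
  (awA : AW_cvg As A) (awB : AW_cvg Bs B) (a0 : X).

Lemma main_a (e : R) : 0 < e -> exists M, forall n, (M <= n)%N ->
  dist (pap_a As Bs a0 n) (A `&` B) <= e.
Proof.
move=> e0.
set C := A `&` B.
have hC : ccn C by exact: ccnI.
have [rho hrho] := bnd_set hABb.
have [z0 Cz0] := hAB0.
have rho0 : 0 <= rho by apply: le_trans (hrho _ Cz0).
have A0 : A !=set0 by case: hA.
have B0 : B !=set0 by case: hB.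
set eps := e / 2.
have eps0 : 0 < eps by rewrite divr_gt0.
have [delta d0 hdel] := hreg eps0.
set L := 2 * rho + 2 * eps + 2.
have L0 : 0 < L by rewrite /L; lra.
set kap := delta / (2 * (L + 1)).
have kap0 : 0 < kap by rewrite divr_gt0 //; lra.
set k := kap ^+ 2.
have k0 : 0 < k by rewrite exprn_gt0.
have [th0 th1 thk] := theta_facts k0.
set th := (2 + k) / (2 + 2 * k) in th0 th1 thk.
have [N hNb] := natbig (rho + 2 * L + 4).
set tau := Num.min (Num.min 1 (delta / 8)) (Num.min ((1 - th) * eps / 4) eps).
have tau0 : 0 < tau.
  rewrite !lt_min ltr01 !divr_gt0 //= ?mulr_gt0 //; lra.
have tau1 : tau <= 1 by rewrite !ge_min lexx.
have tau2 : tau <= delta / 8 by rewrite !ge_min lexx orbT.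
have tau3 : tau <= (1 - th) * eps / 4 by rewrite !ge_min lexx orbT.
have tau4 : tau <= eps by rewrite !ge_min lexx !orbT.
have [M1 hM1] := aw_ev N awA tau0.
have [M2 hM2] := aw_ev N awB tau0.
set n1 := maxn M1 M2.
set D := fun n => dist (pap_a As Bs a0 n) C.
set gam := (1 - th) * eps.
have gam0 : 0 < gam by rewrite mulr_gt0 //; lra.
have e2 : 2 * eps = e by rewrite /eps; field.
have rec : forall m, (n1 <= m)%N -> D m.+1 <= 2 * eps \/ D m.+1 <= D m - gam.
  move=> m hm.
  have hm' : (n1 <= m.+1)%N by apply: leq_trans hm (leqnSn m).
  have hM1' : hN N (As m.+1) A < tau.
    by apply: hM1; apply: leq_trans (leq_maxl M1 M2) hm'.
  have hM2' : hN N (Bs m.+1) B < tau.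
    by apply: hM2; apply: leq_trans (leq_maxr M1 M2) hm'.
  have An0 : As m.+1 !=set0 by case: (hAs m.+1).
  have Bn0 : Bs m.+1 !=set0 by case: (hBs m.+1).
  have zN : forall z, C z -> `|z| <= N%:R.
    move=> z Cz; apply: le_trans (hrho _ Cz) _; apply: le_trans hNb; lra.
  have hzA : forall z, C z -> dist z (As m.+1) <= tau.
    move=> z Cz; apply: le_trans (ltW hM1'); apply: hN_ge2 => //; [exact: Cz.1 | exact: zN].
  have hzB : forall z, C z -> dist z (Bs m.+1) <= tau.
    move=> z Cz; apply: le_trans (ltW hM2'); apply: hN_ge2 => //; [exact: Cz.2 | exact: zN].
  have [sb sa] := step hip (pap_a As Bs a0 m) (hAs m.+1) (hBs m.+1) hC hzA hzB.
  have E : pap_a As Bs a0 m.+1 =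
    Defs.proj (As m.+1) (Defs.proj (Bs m.+1) (pap_a As Bs a0 m)) by [].
  rewrite /D /=.
  set x := pap_a As Bs a0 m in sb sa *.
  set b := Defs.proj (Bs m.+1) x in sb sa *.
  set a := Defs.proj (As m.+1) b in sa *.
  have [Bb _] := proj_spec hip x (hBs m.+1).
  have [Aa _] := proj_spec hip b (hAs m.+1).
  case: (lerP (dist a C) eps) => hD; first by left; lra.
  have sa' := sa (le_trans tau4 (ltW hD)).
  have hr : forall a, As m.+1 a -> eps < dist a C -> kap * dist a C <= dist a (Bs m.+1).
    apply: (reg_lower (eta := tau) (L := L) (N := N) hip hA hB (hAs m.+1) (hBs m.+1) hdel eps0 d0 Cz0 hrho) => //.
    - exact: ltW.
    - exact: hzA.
    - exact: hzB.
    - move=> a' Aa' aN; apply: le_trans (hN_ge1 A0 Aa' aN) _; lra.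
    - move=> b' Bb' bN; apply: le_trans (hN_ge1 B0 Bb' bN) _; lra.
  have kb : kap * dist a C <= `|a - b|.
    by apply: le_trans (hr a Aa hD) _; exact: dist_le.
  have dx0 : 0 <= dist x C by exact: dist_ge0.
  apply: (rec_aux (tau := tau) (kap := kap) eps0 (ltW tau0) tau4 _ th0 th1 thk dx0 hD (ltW kap0) kb sa').
  lra.
suff : exists M, forall n, (M <= n)%N -> D n <= e by [].
have D0 : forall n, 0 <= D n by move=> n; apply: dist_ge0; case: hC.
clearbody D.
have iter : forall j, D (n1 + j)%N <= 2 * eps \/ D (n1 + j)%N <= D n1 - j%:R * gam.
  elim => [|j IH]; first by right; rewrite addn0 mul0r subr0.
  rewrite addnS; have [h|h] := rec (n1 + j) (leq_addr _ _); first by left.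
  case: IH => IH; [left | right]; first lra.
  rewrite -natr1 mulrDl mul1r; move: h IH; generalize (j%:R * gam) => *; lra.
have [j0 hj0] := natbig (D n1 / gam).
exists (n1 + j0)%N => n hn.
rewrite -(subnKC (leq_trans (leq_addr j0 n1) hn)).
have hj : (j0 <= (n - n1)%N)%N by rewrite leq_subRL // (leq_trans (leq_addr j0 n1) hn).
case: (iter (n - n1)%N) => h; first lra.
have h1 : D n1 / gam * gam <= (n - n1)%N%:R * gam.
  apply: ler_wpM2r; first exact: ltW.
  by apply: (le_trans hj0); rewrite ler_nat.
rewrite divfK ?gt_eqF // in h1.
have := D0 (n1 + (n - n1))%N.
move: h h1; generalize ((n - n1)%N%:R * gam) => *; lra.
Qed.

End Main.

Unset Implicit Arguments.

Theorem corollary4p11 (R : realType) (X : completeNormedModType R)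
  (ip : X -> X -> R) (hip : inner_product ip)
  (A B : set X) (hA : ccn A) (hB : ccn B)
  (hAB0 : A `&` B !=set0) (hABb : [bounded x | x in A `&` B])
  (hreg : regular A B) :
  forall (As Bs : nat -> set X),
    (forall n, ccn (As n)) -> (forall n, ccn (Bs n)) ->
    AW_cvg As A -> AW_cvg Bs B ->
  forall a0 : X,
    (fun n => dist (pap_a As Bs a0 n) (A `&` B)) @ \oo --> (0 : R) /\
    (fun n => dist (pap_b As Bs a0 n) (A `&` B)) @ \oo --> (0 : R).
Proof.
move=> As Bs hAs hBs awA awB a0.
have ma := @main_a R X ip hip A B hA hB hAB0 hABb hreg As Bs hAs hBs awA awB a0.
have hC : ccn (A `&` B) by exact: ccnI.
have C0 : A `&` B !=set0 by [].
split.
  apply/cvgr0Pnorm_le => e e0; have [M hM] := ma e e0.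
  exists M => // n hn; rewrite ger0_norm; [exact: hM | exact: dist_ge0].
apply/cvgr0Pnorm_le => e e0.
have [rho hrho] := bnd_set hABb.
have [N0 hN0] := natbig rho.
have e2 : 0 < e / 2 by rewrite divr_gt0.
have e4 : 0 < e / 4 by rewrite divr_gt0.
have [M hM] := ma _ e2.
have [M3 hM3] := aw_ev N0 awA e4.
have [M4 hM4] := aw_ev N0 awB e4.
exists (maxn M (maxn M3 M4)).+1 => // n hn.
case: n hn => [//|m] /=; rewrite ltnS => hm.
have hm3 : (M3 <= m.+1)%N.
  by apply: leq_trans (leqnSn m); apply: leq_trans hm; rewrite leq_max leq_maxl orbT.
have hm4 : (M4 <= m.+1)%N.
  by apply: leq_trans (leqnSn m); apply: leq_trans hm; rewrite leq_max leq_maxr orbT.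
have hmM : (M <= m)%N by apply: leq_trans hm; rewrite leq_maxl.
have zN : forall z, (A `&` B) z -> `|z| <= N0%:R.
  by move=> z Cz; apply: le_trans (hrho _ Cz) _.
have An0 : As m.+1 !=set0 by case: (hAs m.+1).
have Bn0 : Bs m.+1 !=set0 by case: (hBs m.+1).
have hzA : forall z, (A `&` B) z -> dist z (As m.+1) <= e / 4.
  move=> z Cz; apply: le_trans (ltW (hM3 _ hm3)); apply: hN_ge2 => //; [exact: Cz.1 | exact: zN].
have hzB : forall z, (A `&` B) z -> dist z (Bs m.+1) <= e / 4.
  move=> z Cz; apply: le_trans (ltW (hM4 _ hm4)); apply: hN_ge2 => //; [exact: Cz.2 | exact: zN].
have [sb _] := step hip (pap_a As Bs a0 m) (hAs m.+1) (hBs m.+1) hC hzA hzB.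
have hD := hM _ hmM.
have E : pap_b As Bs a0 m.+1 = Defs.proj (Bs m.+1) (pap_a As Bs a0 m) by [].
rewrite E ger0_norm; last exact: dist_ge0.
lra.
Qed.
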